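(* Let $(X_i,A_i,Y_i)_{1\le i\le n}$ be random with $X_i\in\mathcal X$, $A_i\in\{0,1\}$, $Y_i\in\mathcal Y$, let $X'_1,\dots,X'_M$ be the distinct values of $X_1,\dots,X_n$ and $I_k=\{i:X_i=X'_k\}$. Suppose that, conditionally on $(X_{1:n},A_{1:n})$, the joint distribution of $(Y_1,\dots,Y_n)$ is invariant under every permutation of $[n]$ mapping each $I_k$ to itself. For all $x\in\mathcal X$ define (when $N^{(0)}\ge1$) $$\hat C^2(x)=\Big\{y\in\mathcal Y: s(x,y)\le Q_{1-\alpha^2}\Big(\sum_{k=1}^M\sum_{i\in I_k}\frac{N_k^0}{(N^{(0)})^2N_k}\delta_{\bar S_i}+\sum_{k=1}^M\sum_{\substack{i,j\in I_k\\ i\ne j}}\frac{N_k^0(N_k^0-1)}{(N^{(0)})^2N_k(N_k-1)}\delta_{\min\{\bar S_i,\bar S_j\}}+\sum_{1\le k\ne k'\le M}\sum_{i\in I_k}\sum_{j\in I_{k'}}\frac{N_k^0N_{k'}^0}{(N^{(0)})^2N_kN_{k'}}\delta_{\min\{\bar S_i,\bar S_j\}}\Big)\Big\},$$ with $\frac{N_k^0(N_k^0-1)}{N_k(N_k-1)}:=0$ when $N_k=1$. Then $$\mathbb E\Big[\Big(\frac{1}{N^{(0)}}\sum_{i\in I_{A=0}}\mathbf 1\{Y_i\notin\hat C^2(X_i)\}\Big)^2\ \Big|\ X_{1:n},A_{1:n}\Big]\le\alpha^2.$$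
   Context: $Y_i$ is observed only when $A_i=1$. $s:\mathcal X\times\mathcal Y\to\mathbb R$ is a fixed measurable score, $S_i=s(X_i,Y_i)$, and $\bar S_i=S_i$ if $A_i=1$, $\bar S_i=+\infty$ if $A_i=0$. $I_{A=0}=\{i:A_i=0\}$, $N^{(0)}=|I_{A=0}|$; $N_k=|I_k|$, $N_k^0=|\{i\in I_k:A_i=0\}|$. $Q_{1-\beta}(P)=\inf\{t:\mathbb P_{T\sim P}(T\le t)\ge1-\beta\}$ for a distribution $P$ on $\mathbb R\cup\{+\infty\}$; $\delta_v$ is a point mass. The miscoverage proportion $\frac{1}{N^{(0)}}\sum_{i\in I_{A=0}}\mathbf 1\{Y_i\notin\hat C^2(X_i)\}$ is defined as $0$ when $N^{(0)}=0$. *)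

(* Defs.v *)
From HB Require Import structures.
From mathcomp Require Import all_boot all_order all_algebra.
From mathcomp Require Import all_classical all_reals all_analysis.
From mathcomp Require Import perm.
Set Implicit Arguments. Unset Strict Implicit. Unset Printing Implicit Defensive.
Import Order.TTheory GRing.Theory Num.Theory.
Local Open Scope classical_set_scope.
Local Open Scope ring_scope.

Section Defs.
Variable R : realType.

(* Q_q of the discrete distribution  sum_i w i * delta_(v i)  on R ∪ {+oo}:
   inf { t : P_{T ~ P}(T <= t) >= q }.  Used with q = 1 - alpha^2. *)
Definition wquantile (I : finType) (w : I -> R) (v : I -> \bar R) (q : R) : \bar R :=
  ereal_inf [set t : \bar R | q <= \sum_(i : I) w i * ((v i <= t)%E)%:R].

Variables (n : nat) (Xt : Type) (X : 'I_n -> Xt) (A : 'I_n -> bool).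
(* A i = true means A_i = 1 (label observed); A i = false means A_i = 0. *)

Definition sameblk (i j : 'I_n) : bool := `[< X i = X j >].

Definition Nblk (i : 'I_n) : nat := #|[set j | sameblk i j]|.
Definition N0blk (i : 'I_n) : nat := #|[set j | sameblk i j && ~~ A j]|.
Definition Nzero : nat := #|[set j | ~~ A j]|.

(* weight of the point mass delta_(min(Sbar_i, Sbar_j)) in the distribution
   defining hat C^2 (ordered pairs (i,j); i = j gives delta_(Sbar_i)) *)
Definition wpair (ij : 'I_n * 'I_n) : R :=
  let i := ij.1 in let j := ij.2 in
  let N0 : R := (Nzero%:R) in
  if i == j then (N0blk i)%:R / (N0 ^+ 2 * (Nblk i)%:R)
  else if sameblk i j then
    (if Nblk i == 1%N then 0
     else (N0blk i)%:R * ((N0blk i)%:R - 1)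
          / (N0 ^+ 2 * (Nblk i)%:R * ((Nblk i)%:R - 1)))
  else (N0blk i)%:R * (N0blk j)%:R / (N0 ^+ 2 * (Nblk i)%:R * (Nblk j)%:R).

Variables (Yt : Type) (s : Xt -> Yt -> R).

Definition Sbar (y : 'I_n -> Yt) (i : 'I_n) : \bar R :=
  if A i then (s (X i) (y i))%:E else +oo%E.

Definition Chat2 (alpha : R) (y : 'I_n -> Yt) (x : Xt) : set Yt :=
  [set yy | ((s x yy)%:E <=
     wquantile wpair (fun ij => Order.min (Sbar y ij.1) (Sbar y ij.2))
               (1 - alpha ^+ 2))%E].

Definition miscov (alpha : R) (y : 'I_n -> Yt) : R :=
  if Nzero == 0%N then 0
  else (Nzero%:R)^-1 *
       \sum_(i < n | ~~ A i) (`[< ~ Chat2 alpha y (X i) (y i) >])%:R.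

End Defs.

(* sigma-algebra on 'I_n -> Yt generated by the coordinate cylinders
   (the product sigma-algebra on Y^n) *)
Definition prod_meas (n : nat) (dY : measure_display) (Yt : measurableType dY)
  : set (set ('I_n -> Yt)) :=
  <<s [set C | exists (i : 'I_n) (B : set Yt),
                 measurable B /\ C = (fun f : 'I_n -> Yt => f i) @^-1` B] >>.

Definition block_perm (n : nat) (Xt : Type) (X : 'I_n -> Xt) (sg : {perm 'I_n}) :=
  forall i, X (sg i) = X i.

(* Main.v *)
Require Import Defs.
From HB Require Import structures.
From mathcomp Require Import all_boot all_order all_algebra.
From mathcomp Require Import all_classical all_reals all_analysis.
From mathcomp Require Import perm measurable_realfun.
From mathcomp Require Import ring.
Set Implicit Arguments. Unset Strict Implicit. Unset Printing Implicit Defensive.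
Import Order.TTheory GRing.Theory Num.Theory.
Local Open Scope classical_set_scope.
Local Open Scope ring_scope.

Section Comb.
Variables (R : realType) (n : nat) (Xt : Type) (X : 'I_n -> Xt) (A : 'I_n -> bool).
Local Notation sb := (sameblk X).

Lemma sbE i j : sb i j = `[< X i = X j >]. Proof. by []. Qed.
Lemma sb_refl i : sb i i. Proof. by apply/asboolP. Qed.
Lemma sb_sym i j : sb i j = sb j i.
Proof. by apply/asboolP/asboolP. Qed.
Lemma sb_trans i j k : sb i j -> sb j k -> sb i k.
Proof. by rewrite !sbE => /asboolP -> /asboolP ->; apply/asboolP. Qed.

Definition ty (p r : 'I_n * 'I_n) : bool :=
  [&& sb p.1 r.1, sb p.2 r.2 & (p.1 == p.2) == (r.1 == r.2)].
Definition test (p : 'I_n * 'I_n) : bool := ~~ A p.1 && ~~ A p.2.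
Definition tyc p : nat := (\sum_r ty p r)%N.
Definition tcc p : nat := (\sum_r (ty p r && test r))%N.

Lemma ty_refl p : ty p p.
Proof. by rewrite /ty !sb_refl eqxx. Qed.
Lemma ty_sym p r : ty p r = ty r p.
Proof. by rewrite /ty sb_sym [sb p.2 _]sb_sym eq_sym. Qed.
Lemma ty_trans p r u : ty p r -> ty r u -> ty p u.
Proof.
case/and3P=> h1 h2 /eqP h3 /and3P [h4 h5 /eqP h6].
by rewrite /ty (sb_trans h1 h4) (sb_trans h2 h5) h3 h6 eqxx.
Qed.

Lemma tyc_eq p r : ty p r -> tyc p = tyc r.
Proof.
move=> h; apply: eq_bigr => u _; congr nat_of_bool.
apply/idP/idP => h'; first by apply: ty_trans h'; rewrite ty_sym.
exact: ty_trans h h'.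
Qed.

Lemma tyc_gt0 p : (0 < tyc p)%N.
Proof.
rewrite /tyc (bigD1 p) //= ty_refl.
by rewrite addnC addn1.
Qed.

Lemma card_sum (P : pred 'I_n) : #|[set j | P j]| = (\sum_j P j)%N.
Proof.
rewrite -sum1_card big_mkcond /=; apply: eq_bigr => j _.
by case Pj: (P j); [rewrite mem_set | rewrite memNset //= Pj].
Qed.

Lemma sum_pair (F : 'I_n * 'I_n -> nat) :
  (\sum_p F p = \sum_i \sum_j F (i, j))%N.
Proof. by rewrite pair_big; apply: eq_bigr => -[]. Qed.

Lemma S1 (P Q : pred 'I_n) :
  (\sum_i \sum_j [&& P i, Q j & i == j] = \sum_i (P i && Q i))%N.
Proof.
apply: eq_bigr => i _; rewrite (bigD1 i) //= eqxx andbT big1 ?addn0 //.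
by move=> j /negbTE; rewrite eq_sym => ->; rewrite !andbF.
Qed.

Lemma S3 (P Q : pred 'I_n) :
  (\sum_i \sum_j (P i && Q j) = (\sum_i P i) * \sum_j Q j)%N.
Proof.
rewrite big_distrl /=; apply: eq_bigr => i _; rewrite big_distrr /=.
by apply: eq_bigr => j _; case: (P i); case: (Q j).
Qed.

Lemma S2 (P : pred 'I_n) :
  (\sum_i \sum_j [&& P i, P j & i != j] + \sum_i P i = (\sum_i P i) * \sum_j P j)%N.
Proof.
rewrite -S3 -big_split /=; apply: eq_bigr => i _.
rewrite [RHS](bigD1 i) //= andbb (bigD1 i) //= eqxx !andbF add0n [RHS]addnC.
congr addn; apply: eq_bigr => j; rewrite eq_sym => ->; by rewrite andbT.
Qed.


Lemma NblkE k : Nblk X k = (\sum_j sb k j)%N.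
Proof. by rewrite /Nblk card_sum. Qed.
Lemma N0blkE k : N0blk X A k = (\sum_j (sb k j && ~~ A j))%N.
Proof. by rewrite /N0blk card_sum. Qed.
Lemma NzeroE : Nzero A = (\sum_j ~~ A j)%N.
Proof. by rewrite /Nzero card_sum. Qed.

Lemma tyc_kk k : tyc (k, k) = Nblk X k.
Proof.
rewrite /tyc sum_pair NblkE.
transitivity (\sum_i \sum_j [&& sb k i, sb k j & i == j])%N.
  apply: eq_bigr => i _; apply: eq_bigr => j _; rewrite /ty /= eqxx.
  by case: (i == j); rewrite ?andbT ?andbF.
by rewrite S1; apply: eq_bigr => i _; rewrite andbb.
Qed.

Lemma tcc_kk k : tcc (k, k) = N0blk X A k.
Proof.
rewrite /tcc sum_pair N0blkE.
transitivity (\sum_i \sum_j [&& sb k i && ~~ A i, sb k j && ~~ A j & i == j])%N.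
  apply: eq_bigr => i _; apply: eq_bigr => j _; rewrite /ty /test /= eqxx.
  by case: (i == j); case: (sb k i); case: (sb k j); case: (A i); case: (A j).
by rewrite S1; apply: eq_bigr => i _; rewrite andbb.
Qed.

Lemma tyc_same k l : k != l -> sb k l ->
  tyc (k, l) = (Nblk X k * Nblk X k - Nblk X k)%N.
Proof.
move=> kl skl; rewrite /tyc sum_pair NblkE -S2 addnK.
apply: eq_bigr => i _; apply: eq_bigr => j _; rewrite /ty /= (negbTE kl).
have -> : sb l j = sb k j.
  by apply/idP/idP => h; [apply: sb_trans skl h | apply: sb_trans h; rewrite sb_sym].
by case: (i == j); rewrite ?andbT ?andbF.
Qed.

Lemma tcc_same k l : k != l -> sb k l ->
  tcc (k, l) = (N0blk X A k * N0blk X A k - N0blk X A k)%N.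
Proof.
move=> kl skl; rewrite /tcc sum_pair N0blkE -S2 addnK.
apply: eq_bigr => i _; apply: eq_bigr => j _; rewrite /ty /test /= (negbTE kl).
have -> : sb l j = sb k j.
  by apply/idP/idP => h; [apply: sb_trans skl h | apply: sb_trans h; rewrite sb_sym].
by case: (i == j); case: (sb k i); case: (sb k j); case: (A i); case: (A j).
Qed.

Lemma tyc_diff k l : ~~ sb k l -> tyc (k, l) = (Nblk X k * Nblk X l)%N.
Proof.
move=> skl; have kl : k != l by apply: contraNneq skl => ->; rewrite sb_refl.
rewrite /tyc sum_pair !NblkE -S3.
apply: eq_bigr => i _; apply: eq_bigr => j _; rewrite /ty /= (negbTE kl).
case: (@eqP _ i j) => [<-|_]; last by rewrite andbT.
case ki: (sb k i) => //=; case li: (sb l i) => //=.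
by move: skl; rewrite (sb_trans ki (_ : sb i l)) // sb_sym.
Qed.

Lemma tcc_diff k l : ~~ sb k l ->
  tcc (k, l) = (N0blk X A k * N0blk X A l)%N.
Proof.
move=> skl; have kl : k != l by apply: contraNneq skl => ->; rewrite sb_refl.
rewrite /tcc sum_pair !N0blkE -S3.
apply: eq_bigr => i _; apply: eq_bigr => j _; rewrite /ty /test /= (negbTE kl).
case: (@eqP _ i j) => [<-|_]; last by case: (sb k i); case: (sb l j); case: (A i); case: (A j).
case ki: (sb k i) => //=; case li: (sb l i) => //=.
  by move: skl; rewrite (sb_trans ki (_ : sb i l)) // sb_sym.
by rewrite !andbF.
Qed.


Lemma natr_sqB (m : nat) : ((m * m - m)%N%:R : R) = m%:R * (m%:R - 1).
Proof.
rewrite natrB ?natrM ?mulrBr ?mulr1 //.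
by case: m => // m; rewrite leq_pmulr.
Qed.

Lemma wpairE r :
  wpair R X A r = (tcc r)%:R / ((Nzero A)%:R ^+ 2 * (tyc r)%:R).
Proof.
case: r => k l; rewrite /wpair /=.
case: (eqVneq k l) => [<-|kl]; first by rewrite tyc_kk tcc_kk.
case skl: (sb k l).
  rewrite tyc_same // tcc_same //.
  have : (0 < tyc (k, l))%N := tyc_gt0 (k, l).
  rewrite tyc_same // => hN.
  have -> : (Nblk X k == 1%N) = false.
    by apply/negbTE; apply: contraTneq hN => ->.
  by rewrite !natr_sqB mulrA.
rewrite tyc_diff ?skl // tcc_diff ?skl // !natrM !mulrA.
done.
Qed.


Lemma wsum_eq (g : 'I_n * 'I_n -> R) : Nzero A != 0%N ->
  (forall p r, ty p r -> g p = g r) ->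
  \sum_r wpair R X A r * g r = \sum_p (test p)%:R / (Nzero A)%:R ^+ 2 * g p.
Proof.
move=> N0 hg; set N := (Nzero A)%:R.
have Nn0 : N != 0 by rewrite pnatr_eq0.
transitivity (\sum_r \sum_p ((ty r p && test p)%:R * (g r / (N ^+ 2 * (tyc r)%:R)))).
  apply: eq_bigr => r _; rewrite wpairE /tcc natr_sum -mulrA big_distrl /=.
  by apply: eq_bigr => p _; rewrite [_^-1 * _]mulrC.
rewrite exchange_big /=; apply: eq_bigr => p _.
transitivity (\sum_r ((ty r p)%:R * ((test p)%:R * (g p / (N ^+ 2 * (tyc p)%:R))))).
  apply: eq_bigr => r _; case tr: (ty r p); last by rewrite /= !mul0r.
  by rewrite (hg r p tr) (tyc_eq tr) /= !mul1r.
rewrite -big_distrl /= -natr_sum.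
have -> : (\sum_r ty r p)%N = tyc p.
  by rewrite /tyc; apply: eq_bigr => r _; rewrite ty_sym.
have tn0 : (tyc p)%:R != 0 :> R by rewrite pnatr_eq0 -lt0n tyc_gt0.
by field; rewrite tn0 Nn0.
Qed.


Lemma wpair_ge0 r : 0 <= wpair R X A r.
Proof. by rewrite wpairE divr_ge0 // mulr_ge0 // exprn_ge0. Qed.

Lemma wsum1 : Nzero A != 0%N -> \sum_r wpair R X A r = 1.
Proof.
move=> N0.
have := @wsum_eq (fun _ => 1) N0 (fun _ _ _ => erefl).
under eq_bigr do rewrite mulr1.
under [in X in _ = X -> _]eq_bigr do rewrite mulr1.
move=> ->; rewrite -big_distrl /= -natr_sum.
have -> : (\sum_p test p)%N = (Nzero A * Nzero A)%N.
  by rewrite sum_pair NzeroE -S3.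
have Nn0 : (Nzero A)%:R != 0 :> R by rewrite pnatr_eq0.
by rewrite natrM expr2 divff // mulf_neq0.
Qed.


Lemma tperm_bp a b : X a = X b -> forall x, X (tperm a b x) = X x.
Proof. by move=> hab x; case: tpermP => // ->. Qed.

Lemma perm_exists p r : ty p r ->
  exists sg : {perm 'I_n}, [/\ block_perm X sg, sg p.1 = r.1 & sg p.2 = r.2].
Proof.
case: p r => k l [i j] /and3P [/= /asboolP ki /asboolP lj /eqP e].
set t1 := tperm k i.
have t1X x : X (t1 x) = X x by apply: tperm_bp.
have t1l : X (t1 l) = X j by rewrite t1X.
exists (t1 * tperm (t1 l) j)%g; split.
- by move=> x; rewrite permM tperm_bp // t1X.
- have t1k : t1 k = i by rewrite /t1 tpermL.
  rewrite permM t1k; case: (eqVneq k l) e => [<-|kl].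
    by move=> /esym/eqP <-; rewrite t1k tpermL.
  move=> /esym/negbT ij; rewrite tpermD //; last by rewrite eq_sym.
  by rewrite -t1k (inj_eq perm_inj) eq_sym.
- by rewrite permM tpermL.
Qed.

Lemma sbS sg : block_perm X sg -> forall a b, sb (sg a) (sg b) = sb a b.
Proof. by move=> h a b; rewrite /sameblk !h. Qed.
Lemma NblkS sg : block_perm X sg -> forall a, Nblk X (sg a) = Nblk X a.
Proof. by move=> h a; rewrite !NblkE; apply: eq_bigr => j _; rewrite /sameblk h. Qed.
Lemma N0blkS sg : block_perm X sg -> forall a, N0blk X A (sg a) = N0blk X A a.
Proof. by move=> h a; rewrite !N0blkE; apply: eq_bigr => j _; rewrite /sameblk h. Qed.

Lemma wpair_perm sg : block_perm X sg -> forall i j,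
  wpair R X A (sg i, sg j) = wpair R X A (i, j).
Proof.
move=> h i j; rewrite /wpair /= (inj_eq perm_inj) sbS // !NblkS // !N0blkS //.
Qed.

End Comb.

Section Pt.
Variables (R : realType) (n : nat) (Xt Yt : Type) (X : 'I_n -> Xt) (A : 'I_n -> bool).
Variables (s : Xt -> Yt -> R) (alpha : R).

Definition Sf (y : 'I_n -> Yt) a : R := s (X a) (y a).
Definition vf y (p : 'I_n * 'I_n) : R := Order.min (Sf y p.1) (Sf y p.2).
Definition Ev y (p : 'I_n * 'I_n) : bool :=
  (1 - alpha ^+ 2) <= \sum_r wpair R X A r * ((vf y r < vf y p)%R)%:R.

Lemma Sf_Sbar y a : ((Sf y a)%:E <= Sbar X A s y a)%E.
Proof. by rewrite /Sbar; case: (A a) => //; rewrite leey. Qed.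

Lemma K y i j : ~ Chat2 X A s alpha y (X i) (y i) ->
  ~ Chat2 X A s alpha y (X j) (y j) -> Ev y (i, j).
Proof.
rewrite /Chat2 /= => /negP hi /negP hj.
rewrite -ltNge in hi; rewrite -ltNge in hj.
set Q := wquantile _ _ _ in hi hj.
have : (Q < (vf y (i, j))%:E)%E by rewrite /vf /= EFin_min lt_min hi hj.
case/ereal_inf_lt => u /= Su ulv.
rewrite /Ev; apply: (le_trans Su); apply: ler_sum => r _.
apply: ler_wpM2l; first exact: wpair_ge0.
case h: (_ <= u)%E; last by rewrite /= ler0n.
have : ((vf y r)%:E < (vf y (i, j))%:E)%E.
  apply: le_lt_trans ulv; apply: le_trans h.
  by rewrite /vf EFin_min le_min2 // Sf_Sbar.
by rewrite lte_fin => ->.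
Qed.


Lemma sum_pairR (F : 'I_n * 'I_n -> R) : \sum_p F p = \sum_i \sum_j F (i, j).
Proof. by rewrite pair_big; apply: eq_bigr => -[]. Qed.

Lemma miscov_le y : Nzero A != 0%N ->
  miscov X A s alpha y ^+ 2 <=
  \sum_p (test A p)%:R / (Nzero A)%:R ^+ 2 * (Ev y p)%:R.
Proof.
move=> N0; rewrite /miscov (negbTE N0).
set N := (Nzero A)%:R.
set m := fun i => (`[< ~ Chat2 X A s alpha y (X i) (y i) >])%:R : R.
have -> : \sum_(i < n | ~~ A i) m i = \sum_i (~~ A i)%:R * m i.
  rewrite big_mkcond; apply: eq_bigr => i _.
  by case: (A i); rewrite /= ?mul0r ?mul1r.
rewrite expr2 mulrACA big_distrl /= big_distrr /= sum_pairR; apply: ler_sum => i _.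
rewrite big_distrr /= big_distrr /=; apply: ler_sum => j _.
rewrite /test /= /m.
case: asboolP => hi; case: asboolP => hj;
  case: (A i); case: (A j); rewrite /= ?(mulr0, mul0r, mulr1, mul1r);
  rewrite ?mulr_ge0 ?invr_ge0 ?exprn_ge0 ?ler0n //.
by rewrite (K hi hj) /= mulr1 expr2 invfM.
Qed.


Lemma Ev_sum_le y : Nzero A != 0%N ->
  \sum_r wpair R X A r * (Ev y r)%:R <= alpha ^+ 2.
Proof.
move=> N0.
case: (pickP (Ev y)) => [r0 Hr0|none]; last first.
  rewrite big1 ?sqr_ge0 // => r _; by rewrite none mulr0.
case: (arg_minP (vf y) Hr0) => r1 Er1 Hmin.
apply: (@le_trans _ _ (\sum_r wpair R X A r * (1 - ((vf y r < vf y r1)%R)%:R))).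
  apply: ler_sum => r _; apply: ler_wpM2l; first exact: wpair_ge0.
  case Er: (Ev y r).
    by rewrite ltNge (Hmin r Er) /= subr0.
  by rewrite /= subr_ge0; case: (_ < _)%R.
under eq_bigr do rewrite mulrBr mulr1.
rewrite sumrB wsum1 // lerBlDr -lerBlDl.
exact: Er1.
Qed.


Lemma vf_perm (sg : {perm 'I_n}) : block_perm X sg -> forall y r,
  vf (fun a => y (sg a)) r = vf y (sg r.1, sg r.2).
Proof. by move=> h y r; rewrite /vf /Sf /= !h. Qed.

Lemma Ev_perm (sg : {perm 'I_n}) : block_perm X sg -> forall y p,
  Ev (fun a => y (sg a)) p = Ev y (sg p.1, sg p.2).
Proof.
move=> h y p; rewrite /Ev.
set f := fun r : 'I_n * 'I_n => (sg r.1, sg r.2).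
have finj : injective f.
  by move=> [a b] [c d] [/perm_inj -> /perm_inj ->].
rewrite [in RHS](reindex_inj finj) /=.
congr (_ <= _); apply: eq_bigr => r _.
by rewrite !vf_perm // /f wpair_perm.
Qed.

End Pt.

Section Ms.
Variables (R : realType) (n : nat) (dX : measure_display) (Xt : measurableType dX)
  (dY : measure_display) (Yt : measurableType dY) (s : Xt -> Yt -> R)
  (hs : measurable_fun setT (fun p : Xt * Yt => s p.1 p.2))
  (alpha : R) (X : 'I_n -> Xt) (A : 'I_n -> bool).

Lemma Ev_meas d (T : measurableType d) (Z : 'I_n -> T -> Yt) :
  (forall a, measurable_fun setT (Z a)) -> forall p,
  measurable [set t | Ev X A s alpha (fun a => Z a t) p].
Proof.
move=> hZ p.
have mS a : measurable_fun setT (fun t => Sf X s (fun a => Z a t) a).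
  exact: (measurableT_comp hs (measurable_fun_pair (measurable_cst _) (hZ a))).
have mv r : measurable_fun setT (fun t => vf X s (fun a => Z a t) r).
  exact: measurable_minr.
have msum : measurable_fun setT (fun t => \sum_r wpair R X A r *
   ((vf X s (fun a => Z a t) r < vf X s (fun a => Z a t) p)%R)%:R).
  apply: measurable_sum => r.
  have -> : (fun t => wpair R X A r *
   ((vf X s (fun a => Z a t) r < vf X s (fun a => Z a t) p)%R)%:R) =
   (fun t => if (vf X s (fun a => Z a t) r < vf X s (fun a => Z a t) p)%R
             then wpair R X A r else 0).
    by apply/funext => t; case: (_ < _)%R; rewrite ?mulr1 ?mulr0.
  apply: measurable_fun_ifT; last exact: measurable_cst.
    exact: measurable_fun_ltr.
  exact: measurable_cst.
have mb := measurable_fun_ler (measurable_cst (1 - alpha ^+ 2)) msum.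
rewrite -[X in measurable X]setTI.
have -> : [set t | Ev X A s alpha (fun a => Z a t) p] =
  (fun t => (1 - alpha ^+ 2) <= \sum_r wpair R X A r *
   ((vf X s (fun a => Z a t) r < vf X s (fun a => Z a t) p)%R)%:R) @^-1` [set true].
  by apply/seteqP; split => t /=.
exact: mb.
Qed.


Definition Gcyl : set (set ('I_n -> Yt)) :=
  [set C | exists (i : 'I_n) (B : set Yt), measurable B /\
                 C = (fun f : 'I_n -> Yt => f i) @^-1` B].

Lemma Ev_prod p : prod_meas [set y | Ev X A s alpha y p].
Proof.
have hZ a : measurable_fun setT (fun f : g_sigma_algebraType Gcyl => f a).
  move=> _ B mB; rewrite setTI; apply: sub_sigma_algebra.
  by exists a, B.
exact: (Ev_meas hZ p).
Qed.

End Ms.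

Section EL.
Local Open Scope ereal_scope.
Lemma le_int_nm (R : realType) d (T : measurableType d) (mu : {measure set T -> \bar R})
  (f g : T -> \bar R) : (forall x, (0 <= f x)%E) -> (forall x, (f x <= g x)%E) ->
  (\int[mu]_x f x <= \int[mu]_x g x)%E.
Proof.
move=> f0 fg.
have g0 : forall x, (0 <= g x)%E by move=> x; exact: le_trans (f0 x) (fg x).
rewrite /integral !patch_setT.
have -> : f^\- = g^\-.
  apply/funext => x; rewrite (@ge0_funenegE _ _ setT) ?inE //.
  by rewrite (@ge0_funenegE _ _ setT) ?inE.
apply: leeB => //.
apply: le_ereal_sup => _ [h /= hf <-]; exists h => //= x.
apply: (le_trans (hf x)); rewrite (@ge0_funeposE _ _ setT) ?inE //.
by rewrite (@ge0_funeposE _ _ setT) ?inE.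
Qed.

Lemma int_lin (R : realType) d (T : measurableType d) (mu : {measure set T -> \bar R})
  (I : finType) (c : I -> R) (B : I -> set T) :
  (forall i, (0 <= c i)%R) -> (forall i, measurable (B i)) ->
  \int[mu]_t (\sum_i c i * \1_(B i) t)%R%:E = \sum_i (c i)%:E * mu (B i).
Proof.
move=> c0 mB.
under eq_integral do rewrite -sumEFin.
rewrite ge0_integral_sum //; first last.
- by move=> i t _; rewrite lee_fin mulr_ge0.
- move=> i; apply/measurable_EFinP; apply: measurable_funM.
    exact: measurable_cst.
  exact: measurable_indic.
apply: eq_bigr => i _.
under eq_integral do rewrite EFinM.
rewrite ge0_integralZl_EFin //; last first.
  by apply/measurable_EFinP; exact: measurable_indic.
by rewrite integral_indic // setIT.
Qed.

End EL.

Lemma indic_setE (T : Type) (b : T -> bool) (R : realType) t :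
  (\1_[set x | b x] t : R) = (b t)%:R.
Proof.
by rewrite indicE; case bt: (b t); [rewrite mem_set | rewrite memNset //= bt].
Qed.

Unset Implicit Arguments.

Theorem theorem4 (R : realType) (n : nat)
  (dX : measure_display) (Xt : measurableType dX)
  (dY : measure_display) (Yt : measurableType dY)
  (s : Xt -> Yt -> R)
  (hs : measurable_fun setT (fun p : Xt * Yt => s p.1 p.2))
  (alpha : R)
  (X : 'I_n -> Xt) (A : 'I_n -> bool)
  (d : measure_display) (Omega : measurableType d) (P : probability Omega R)
  (Y : 'I_n -> Omega -> Yt)
  (hY : forall i, measurable_fun setT (Y i))
  (hexch : forall sg : {perm 'I_n}, block_perm X sg ->
     forall E : set ('I_n -> Yt), prod_meas E ->
       P ((fun w => fun i => Y i w) @^-1` E) =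
       P ((fun w => fun i => Y (sg i) w) @^-1` E)) :
  ('E_P[fun w => (miscov X A s alpha (fun i => Y i w) ^+ 2)%R] <= (alpha ^+ 2)%:E)%E.
Proof.
rewrite unlock.
have [N0|N0] := eqVneq (Nzero A) 0%N.
  under eq_integral do rewrite /miscov N0 eqxx expr2 mulr0.
  by rewrite integral0 lee_fin sqr_ge0.
set B := fun p => [set w | Ev X A s alpha (fun i => Y i w) p].
have mB p : measurable (B p) := Ev_meas hs alpha X A hY p.
set N := (Nzero A)%:R : R.
set c := fun p : 'I_n * 'I_n => (test A p)%:R / N ^+ 2.
have c0 p : (0 <= c p)%R by rewrite /c divr_ge0 // exprn_ge0.
apply: (@le_trans _ _ (\int[P]_w (\sum_p c p * \1_(B p) w)%R%:E)%E).
  apply: le_int_nm => w; first by rewrite lee_fin sqr_ge0.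
  rewrite lee_fin; apply: (le_trans (miscov_le _ _ _ _ N0)).
  by apply: ler_sum => p _; rewrite indic_setE.
rewrite int_lin //.
set g := fun p => fine (P (B p)).
have Pg p : P (B p) = (g p)%:E by rewrite /g fineK // fin_num_measure.
have hg p r : ty X p r -> g p = g r.
  case/perm_exists => sg [bp e1 e2].
  rewrite /g; congr fine.
  have := hexch sg bp _ (Ev_prod hs alpha X A p).
  rewrite /B /= => ->; congr (P _).
  apply/seteqP; split => w /=;
    by have := Ev_perm A s alpha bp (fun i => Y i w) p; rewrite /= e1 e2 => ->.
have -> : (\sum_p (c p)%:E * P (B p) = \sum_r (wpair R X A r)%:E * P (B r))%E.
  under eq_bigr do rewrite Pg -EFinM.
  under [in RHS]eq_bigr do rewrite Pg -EFinM.
  by rewrite !sumEFin (wsum_eq N0 hg).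
rewrite -int_lin //; last exact: wpair_ge0.
apply: (@le_trans _ _ (\int[P]_w (cst (alpha ^+ 2)%:E) w)%E).
  apply: le_int_nm => w.
    by rewrite lee_fin sumr_ge0 // => r _; rewrite mulr_ge0 ?wpair_ge0 ?indic_ge0.
  rewrite lee_fin; under eq_bigr do rewrite indic_setE.
  exact: Ev_sum_le.
rewrite integral_cst //.
rewrite [X in (_ * X <= _)%E](_ : _ = 1%E); first by rewrite mule1.
exact: probability_setT.
Qed.
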